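(* Let $n \geq 2$, $b \geq 2$ and $B$ be positive integers, let $L := \lceil \log_2 n \rceil$ and $T := bB$, and assume $$B \geq \frac{n}{b} L \qquad\text{and}\qquad B \geq 4L .$$ Define $s_0 := n$ and $s_{r+1} := \lceil s_r/2 \rceil$ for $r \geq 0$, and for each $r \geq 0$ let $J_r := \left\lfloor \frac{T}{s_r L} \right\rfloor$. Then for every integer $r$ with $0 \leq r < L - 1$ and every integer $z$ with $0 \leq z < b$, $$s_{r+1} - \left\lceil \frac{b - z}{J_{r+1}} \right\rceil \;\geq\; \left\lceil \frac{z}{J_r} \right\rceil .$$
   Context: $\lceil\cdot\rceil$ and $\lfloor\cdot\rfloor$ denote the ceiling and floor functions. In the paper, $s_r$ is the number of surviving candidate arms in round $r$ of Sequential Halving with $n$ arms and total budget $T$, and $J_r$ is the number of pulls of each surviving arm in round $r$; the inequality expresses that when a batch of size $b$ spans rounds $r$ and $r+1$ (with $z$ pulls in round $r$), no incorrect promotion occurs. The hypotheses guarantee $J_r \ge 1$ for all relevant $r$. *)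

(* Defs.v *)
From mathcomp Require Import all_boot.

Definition ceildiv (a d : nat) : nat := (a + d.-1) %/ d.

(* L = ceil(log2 n): the smallest e with n <= 2^e (up_log from prime.v). *)
Definition clog2 (n : nat) : nat := up_log 2 n.

Fixpoint surv (n r : nat) : nat :=
  match r with
  | 0 => n
  | r'.+1 => ceildiv (surv n r') 2
  end.

Definition pulls (n T r : nat) : nat := T %/ (surv n r * clog2 n).

(* Main.v *)
Require Import Defs.
From mathcomp Require Import all_boot.
From mathcomp Require Import zify.

Lemma ceildiv_le a d k : 0 < d -> a <= k * d -> ceildiv a d <= k.
Proof.
move=> d0 h; rewrite /ceildiv -ltnS ltn_divLR //; rewrite mulSn; lia.
Qed.

Lemma ceildiv_lb a d : 0 < d -> ceildiv a d * d <= a + d.-1.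
Proof. move=> d0; rewrite /ceildiv; exact: leq_divM. Qed.

Lemma survS n r : 2 * surv n r.+1 >= surv n r /\ surv n r.+1 <= surv n r.
Proof. rewrite /= /ceildiv /=; set x := surv n r. lia. Qed.

Lemma surv_pow n r : n <= surv n r * 2 ^ r.
Proof.
elim: r => [|r IH]; first by rewrite muln1.
have [h1 _] := survS n r.
rewrite expnS; apply: (leq_trans IH).
by rewrite mulnCA mulnA leq_mul2r h1 orbT.
Qed.

Lemma surv_le n r : surv n r <= n.
Proof.
elim: r => [//|r IH]; have [_ h] := survS n r; exact: leq_trans h IH.
Qed.

Theorem mainTheorem2 (n b B : nat) :
  2 <= n -> 2 <= b -> 0 < B ->
  n * clog2 n <= b * B ->          (* B >= (n / b) L *)
  4 * clog2 n <= B ->              (* B >= 4 L *)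
  forall r z : nat, r < clog2 n - 1 -> z < b ->
    ceildiv z (pulls n (b * B) r) + ceildiv (b - z) (pulls n (b * B) r.+1)
      <= surv n r.+1.
Proof.
move=> hn hb hB h1 h2 r z hr hz.
set L := clog2 n.
have L0 : 0 < L by rewrite /L /clog2 up_log_gt0 hn.
have Lgt : 2 ^ L.-1 < n by apply: up_log_gtn.
have s3 : 2 < surv n r.
  have hp := surv_pow n r.
  have : 2 ^ r.+1 < surv n r * 2 ^ r.
    apply: leq_trans hp; apply: leq_ltn_trans Lgt; rewrite leq_exp2l //; lia.
  by rewrite expnS ltn_pmul2r ?expn_gt0.
have [hs1 hs2] := survS n r.
set s := surv n r in s3 hs1 hs2 *.
set s' := surv n r.+1 in hs1 hs2 *.
rewrite /pulls -/L -/s -/s'.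
set T := b * B.
set J := T %/ (s * L).
set J' := T %/ (s' * L).
have sL0 : 0 < s * L by rewrite muln_gt0 L0; lia.
have s'L0 : 0 < s' * L by rewrite muln_gt0 L0; lia.
have J1 : 0 < J.
  rewrite divn_gt0 //; apply: leq_trans h1; rewrite leq_mul2r surv_le orbT //.
have JJ : J <= J'.
  rewrite /J /J'; apply: leq_div2l => //; rewrite leq_mul2r hs2 orbT //.
have key : 4 * b < J.+1 * s.
  have := ltn_ceil T sL0; rewrite -/J => h.
  have : (4 * b) * L < (J.+1 * s) * L.
    apply: leq_ltn_trans _ (leq_trans h _); last by rewrite mulnA.
    rewrite -mulnA mulnCA /T leq_mul2l h2 orbT //.
  by rewrite ltn_pmul2r.
have key2 : b.-1 <= (s' - 1) * J.
  nia.
have cl := ceildiv_lb z J J1.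
set c := ceildiv z J in cl *.
have e : (s' - 1) * J + J = s' * J.
  by rewrite -mulSnr; congr (_ * _); lia.
have cs : c < s'.
  have : c * J < s' * J by move: cl; rewrite -e; lia.
  by rewrite ltn_pmul2r.
have hd : ceildiv (b - z) J' <= s' - c.
  apply: ceildiv_le; first lia.
  apply: leq_trans (_ : (s' - c) * J <= _); last by rewrite leq_mul2l JJ orbT.
  rewrite mulnBl; move: cl; rewrite -e; lia.
lia.
Qed.
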